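(* Let $M_t=(-1,1)\times(-1,0)$ with coordinates $(u,v)$ and metric $g_t=-\Omega^2(du\otimes dv+dv\otimes du)$, $\Omega$ smooth and strictly positive, with $\partial_u$ future directed null. Let $\gamma:[0,1]\to M_t$ be a locally Lipschitz future directed causal curve and let $p\in J^+(\gamma(0),M_t)\cap J^-(\gamma(1),M_t)$. Then there exists a causal homotopy $\Gamma:[0,1]\times[0,1]\to M_t$ of $\gamma$ with fixed endpoints such that $p=\Gamma(s;\lambda)$ for some $(s,\lambda)\in[0,1]\times[0,1]$.
   Context: $J^\pm(q,M_t)$ is the set of points reachable from $q$ by a future/past directed locally Lipschitz causal curve. A causal homotopy of $\gamma$ with fixed endpoints is a continuous map $\Gamma:[0,1]\times[0,1]\to M_t$, $(s,\lambda)\mapsto\Gamma(s;\lambda)$, such that $\Gamma(\cdot;0)=\gamma$ and, for each $\lambda$, $s\mapsto\Gamma(s;\lambda)$ is a future directed locally Lipschitz causal curve from $\gamma(0)$ to $\gamma(1)$. *)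

(* Defs.v *)
From mathcomp Require Import all_boot all_order all_algebra.
From mathcomp Require Import all_classical all_reals all_analysis.
Set Implicit Arguments. Unset Strict Implicit. Unset Printing Implicit Defensive.
Import Order.TTheory GRing.Theory Num.Theory.
Import numFieldNormedType.Exports.
Local Open Scope classical_set_scope.
Local Open Scope ring_scope.

Section Defs.
Variable R : realType.

Definition Mt : set (R * R) := [set z | -1 < z.1 < 1 /\ -1 < z.2 < 0].

(* f : R -> R -> R is C^infty on the open set U: there is a family D of
   functions indexed by words of partial-derivative directions
   (false = d/du, true = d/dv), with D [::] = f, each D w continuous on U,
   and D (b :: w) the partial derivative of D w in direction b on U. *)
Definition smooth_on (U : set (R * R)) (f : R -> R -> R) : Prop :=
  exists D : seq bool -> R -> R -> R,
    D [::] = f /\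
    forall w : seq bool,
      {within U, continuous (fun z : R * R => D w z.1 z.2)} /\
      forall z : R * R, U z ->
        (derivable (fun x => D w x z.2) z.1 1 /\
         derive1 (fun x => D w x z.2) z.1 = D (false :: w) z.1 z.2) /\
        (derivable (fun y => D w z.1 y) z.2 1 /\
         derive1 (fun y => D w z.1 y) z.2 = D (true :: w) z.1 z.2).

Definition gt (Omega : R -> R -> R) (z : R * R) (X Y : R * R) : R :=
  - (Omega z.1 z.2) ^+ 2 * (X.1 * Y.2 + X.2 * Y.1).

(* Time orientation: d_u is future directed null; since d_v is null with
   g(d_u, d_v) < 0, the field T = d_u + d_v is a future directed timelike
   field, and a causal vector X is future directed iff g(X, T) < 0. *)
Definition future_causal (Omega : R -> R -> R) (z : R * R) (X : R * R) : Prop :=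
  X != 0 /\ gt Omega z X X <= 0 /\ gt Omega z X (1, 1) < 0.

(* gamma : [0,1] -> M_t (given as a function on R, only its values on [0,1]
   matter) is a future directed locally Lipschitz causal curve: it takes
   values in M_t, is Lipschitz on the compact [0,1] (= locally Lipschitz),
   and for Lebesgue-almost every s in [0,1] it is differentiable at s with
   future directed causal velocity. *)
Definition fd_lipschitz_causal (Omega : R -> R -> R) (gamma : R -> R * R) : Prop :=
  (forall s, s \in `[0, 1] -> Mt (gamma s)) /\
  (exists k : R, forall s t, s \in `[0, 1] -> t \in `[0, 1] ->
      `|(gamma s).1 - (gamma t).1| <= k * `|s - t| /\
      `|(gamma s).2 - (gamma t).2| <= k * `|s - t|) /\
  {ae (@lebesgue_measure R), forall s, s \in `[0, 1] ->
      derivable (fun t => (gamma t).1) s 1 /\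
      derivable (fun t => (gamma t).2) s 1 /\
      future_causal Omega (gamma s)
        (derive1 (fun t => (gamma t).1) s, derive1 (fun t => (gamma t).2) s)}.

Definition Jplus (Omega : R -> R -> R) (q : R * R) : set (R * R) :=
  [set p | exists c : R -> R * R,
     fd_lipschitz_causal Omega c /\ c 0 = q /\ c 1 = p].

Definition Jminus (Omega : R -> R -> R) (q : R * R) : set (R * R) :=
  [set p | exists c : R -> R * R,
     fd_lipschitz_causal Omega c /\ c 0 = p /\ c 1 = q].

Definition causal_homotopy (Omega : R -> R -> R) (gamma : R -> R * R)
    (Gamma : R -> R -> R * R) : Prop :=
  {within `[0, 1] `*` `[0, 1], continuous (fun z : R * R => Gamma z.1 z.2)} /\
  (forall s, s \in `[0, 1] -> Gamma s 0 = gamma s) /\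
  (forall lam, lam \in `[0, 1] ->
     fd_lipschitz_causal Omega (fun s => Gamma s lam) /\
     Gamma 0 lam = gamma 0 /\ Gamma 1 lam = gamma 1).

End Defs.

(* Main.v *)
Require Import Defs.
From mathcomp Require Import all_boot all_order all_algebra.
From mathcomp Require Import all_classical all_reals all_analysis.
From mathcomp Require Import ring lra measurable_realfun.
Import Order.TTheory GRing.Theory Num.Theory.
Import numFieldNormedType.Exports.
Local Open Scope classical_set_scope.
Local Open Scope ring_scope.

Section S.
Variable R : realType.
Local Notation mu := (@lebesgue_measure R).

Lemma ae_of_negl (N : set R) (P : R -> Prop) :
  mu.-negligible N -> (forall x, ~ N x -> P x) -> {ae mu, forall x, P x}.
Proof.
move=> [A [mA A0 NA]] H; exists A; split => // x /= nPx; apply: NA.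
by apply: contrapT => Nx; apply: nPx; exact: H.
Qed.

Lemma negl_of_ae (P : R -> Prop) : {ae mu, forall x, P x} ->
  exists N : set R, mu.-negligible N /\ (forall x, ~ N x -> P x).
Proof.
move=> H; exists (~` [set x | P x]); split => // x /=.
by move=> nn; apply: contrapT.
Qed.

Lemma negl1 (a : R) : mu.-negligible [set a].
Proof. by exists [set a]; split => //; exact: lebesgue_measure_set1. Qed.

Definition cone (X : R * R) := 0 <= X.1 /\ 0 <= X.2 /\ 0 < X.1 + X.2.

Lemma fc_cone (Omega : R -> R -> R) z X : 0 < Omega z.1 z.2 ->
  future_causal Omega z X <-> cone X.
Proof.
move=> Op; have w0 : 0 < Omega z.1 z.2 ^+ 2 by rewrite exprn_gt0.
rewrite /future_causal /gt /cone /=.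
split.
- move=> [_ [h1 h2]].
  move: h1; rewrite mulNr oppr_le0 pmulr_rge0 // => h1.
  move: h2; rewrite mulNr oppr_lt0 pmulr_rgt0 // !mulr1 => h2.
  split; [|split=>//]; nra.
- move=> [h1 [h2 h3]]; split; [|split].
  + apply/eqP => X0; move: h3; rewrite X0 /=; lra.
  + by rewrite mulNr oppr_le0 pmulr_rge0 //; nra.
  + by rewrite mulNr oppr_lt0 pmulr_rgt0 // !mulr1.
Qed.

Definition good (c : R -> R * R) (s : R) :=
  derivable (fun t => (c t).1) s 1 /\ derivable (fun t => (c t).2) s 1 /\
  cone (derive1 (fun t => (c t).1) s, derive1 (fun t => (c t).2) s).

Definition lipc (c : R -> R * R) (k : R) := forall s t,
  s \in `[0, 1] -> t \in `[0, 1] ->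
  `|(c s).1 - (c t).1| <= k * `|s - t| /\ `|(c s).2 - (c t).2| <= k * `|s - t|.

Definition Pc (c : R -> R * R) :=
  (forall s, s \in `[0, 1] -> Mt (c s)) /\ (exists k, lipc c k) /\
  exists N : set R, mu.-negligible N /\
    forall s, ~ N s -> s \in `[0, 1] -> good c s.

Lemma Pc_fd (Omega : R -> R -> R)
  (Opos : forall z : R * R, Mt z -> 0 < Omega z.1 z.2) c :
  Pc c <-> fd_lipschitz_causal Omega c.
Proof.
split.
- move=> [hM [[k hk] [N [hN hg]]]]; split => //; split; first by exists k.
  case: hN => [A [mA A0 NA]]; exists A; split => // s /= ns.
  apply: NA; apply: contrapT => nN; apply: ns => s01.
  have [d1 [d2 cc]] := hg s nN s01.
  by split => //; split => //; apply/(fc_cone _ _ _ (Opos _ (hM s s01))).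
- move=> [hM [[k hk] hae]]; split => //; split; first by exists k.
  case: hae => [A [mA A0 NA]].
  exists A; split; first by exists A; split.
  move=> s nA s01.
  have [d1 [d2 fc]] : derivable (fun t => (c t).1) s 1 /\ derivable (fun t => (c t).2) s 1 /\
      future_causal Omega (c s) (derive1 (fun t => (c t).1) s, derive1 (fun t => (c t).2) s).
    by apply: contrapT => hn; apply: nA; apply: NA => /= /(_ s01).
  by split => //; split => //; apply/(fc_cone _ _ _ (Opos _ (hM s s01))).
Qed.

Lemma D1 (f g : R -> R) s : (\forall t \near s, f t = g t) ->
  derivable f s 1 -> derivable g s 1 /\ derive1 g s = derive1 f s.
Proof.
move=> fg df; split; first exact: (near_eq_derivable fg df).
by rewrite !derive1E (near_eq_derive _ fg).
Qed.

Lemma in01_oo (s : R) : s \in `[0, 1] -> s != 0 -> s != 1 -> s \in `]0, 1[.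
Proof.
rewrite !in_itv /= => /andP[a b] s0 s1; apply/andP; split.
- by rewrite lt_neqAle eq_sym s0 a.
- by rewrite lt_neqAle s1 b.
Qed.

Lemma oo_in01 (s : R) : s \in `]0, 1[ -> s \in `[0, 1].
Proof. by rewrite !in_itv /= => /andP[a b]; apply/andP; split; apply: ltW. Qed.

Lemma Pc_ext (c d : R -> R * R) : Pc c -> (forall s, s \in `[0, 1] -> d s = c s) -> Pc d.
Proof.
move=> [hM [[k hk] [N [hN hg]]]] e.
split; first by move=> s s01; rewrite e //; exact: hM.
split; first by exists k => s t s01 t01; rewrite !e //; exact: hk.
exists (N `|` [set 0] `|` [set 1]); split.
  by apply: negligibleU; [apply: negligibleU => //; exact: negl1 | exact: negl1].
move=> s nN s01.
have s0 : s != 0 by apply/eqP => s0; apply: nN; left; right.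
have s1 : s != 1 by apply/eqP => s1; apply: nN; right.
have soo := in01_oo s s01 s0 s1.
have nr : \forall t \near s, c t = d t.
  apply: filterS (near_in_itvoo soo) => t /oo_in01 t01; by rewrite e.
have [d1 [d2 cc]] := hg s (fun h => nN (or_introl (or_introl h))) s01.
have [e1 de1] := D1 _ _ _ (filterS (fun t (h : c t = d t) => f_equal fst h) nr) d1.
have [e2 de2] := D1 _ _ _ (filterS (fun t (h : c t = d t) => f_equal snd h) nr) d2.
by split => //; split => //; rewrite de1 de2.
Qed.

Definition cl (s : R) : R := if s < 0 then 0 else if 1 < s then 1 else s.

Lemma cl01 s : cl s \in `[0, 1].
Proof.
rewrite /cl in_itv /=; case: ifP => h1; first by rewrite lexx ler01.
case: ifP => h2; first by rewrite ler01 lexx.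
by move/negbT: h1; move/negbT: h2; rewrite -!leNgt => -> ->.
Qed.

Lemma clid s : s \in `[0, 1] -> cl s = s.
Proof.
rewrite in_itv /= /cl => /andP[a b].
by rewrite ltNge a /= ltNge b.
Qed.

Lemma cl_lip s t : `|cl s - cl t| <= `|s - t|.
Proof.
have h1 := ler_norm (s - t).
have h2 : t - s <= `|s - t| by rewrite distrC; exact: ler_norm.
rewrite ler_norml /cl.
case: ifP => a; case: ifP => b; try case: ifP => c; try case: ifP => d;
  apply/andP; split; lra.
Qed.

Lemma lip_cont (f : R -> R) k : (forall s t, `|f s - f t| <= k * `|s - t|) ->
  continuous f.
Proof.
move=> H x; apply/cvgrPdist_lt => e e0.
have kp : 0 < `|k| + 1 by rewrite ltr_pwDr // normr_ge0.
have hb : \forall y \near x, `|x - y| < e / (`|k| + 1).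
  exact: (@cvgr_dist_lt _ _ _ (nbhs x) _ id x (@cvg_id _ (nbhs x)) _ (divr_gt0 e0 kp)).
apply: filterS hb => y hy.
apply: (le_lt_trans (H x y)).
apply: (@le_lt_trans _ _ ((`|k| + 1) * `|x - y|)).
  apply: ler_wpM2r; first exact: normr_ge0.
  by apply: (le_trans (ler_norm k)); rewrite lerDl.
by rewrite -ltr_pdivlMl // mulrC.
Qed.


Lemma pre_itv (b x y : R) :
  (fun s : R => 2 * s + b) @^-1` `]x, y] = [set` `](x - b) / 2, (y - b) / 2]].
Proof.
apply/seteqP; split => s /=; rewrite !in_itv /= => /andP[h1 h2]; apply/andP; split.
- by rewrite ltr_pdivrMr // ; lra.
- by rewrite ler_pdivlMr //; lra.
- by move: h1; rewrite ltr_pdivrMr //; lra.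
- by move: h2; rewrite ler_pdivlMr //; lra.
Qed.

Lemma aff_meas (b : R) : measurable_fun [set: measurableTypeR R] ((fun s : R => 2 * s + b) : measurableTypeR R -> measurableTypeR R).
Proof.
apply: continuous_measurable_fun.
move=> x; apply: continuousD; last exact: cvg_cst.
apply: continuousM; [exact: cvg_cst | exact: cvg_id].
Qed.

Lemma aff_push (b : R) (A : set R) : measurable A ->
  lebesgue_measure A = (2%:E * lebesgue_measure ((fun s : R => (2 * s + b)%R) @^-1` A))%E.
Proof.
move=> mA.
pose P := @measure_function_pushforward__canonical__measure_function_Measure _ _ (measurableTypeR R) (measurableTypeR R) R lebesgue_measure _ (aff_meas b).
have := @lebesgue_measure_unique R (@measure_function_mscale__canonical__measure_function_Measure _ _ R (2%:nng) P) _ A mA.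
apply.
move=> X [[x y] _ <-] /=.
rewrite /mscale /= /pushforward pre_itv !lebesgue_measure_itv /=.
rewrite !lte_fin.
have -> : ((x - b) / 2 < (y - b) / 2) = (x < y).
  by rewrite ltr_pM2r ?invr_gt0 // ltrD2r.
case: ifP => _; last by rewrite mule0.
rewrite -!EFinD -EFinM. by congr (_%:E); field.
Qed.

Lemma aff_negl (b : R) (N : set R) :
  (@lebesgue_measure R).-negligible N ->
  (@lebesgue_measure R).-negligible [set s | N (2 * s + b)].
Proof.
move=> [A [mA A0 NA]].
exists ((fun s : R => (2 * s + b)%R) @^-1` A); split.
- by rewrite -[X in measurable X]setTI; exact: aff_meas.
- have := @aff_push b A mA; rewrite A0 => /esym/eqP.
  by rewrite mule_eq0 eqe pnatr_eq0 /= => /eqP.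
- by move=> s /= /NA.
Qed.

Lemma D2 (g : R -> R) s b : derivable g (2 * s + b) 1 ->
  derivable (fun t : R => g (2 * t + b)) s 1 /\
  derive1 (fun t : R => g (2 * t + b)) s = 2 * derive1 g (2 * s + b).
Proof.
move=> dg.
have dm : derivable (fun t : R => 2 * t) s 1.
  by apply: derivableM => //; exact: derivable_id.
have df : derivable (fun t : R => 2 * t + b) s 1.
  by apply: derivableD => //; exact: derivable_cst.
have d1 : derive1 (fun t : R => 2 * t + b) s = 2.
  rewrite derive1E deriveD; [|exact: dm|exact: (derivable_cst b)].
  have -> : 'D_1 (fun=> b) s = 0 :> R by exact: derive_cst.
  rewrite addr0.
  have -> : ( *%R 2) = 2 \*o (@id R) by [].
  rewrite deriveMl; last exact: derivable_id.
  by rewrite derive_id mulr1.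
split.
- apply/derivable1_diffP; apply: (@differentiable_comp _ _ _ _ (fun t : R => 2 * t + b) g).
  + exact/derivable1_diffP.
  + exact/derivable1_diffP.
- have := derive1_comp df dg; rewrite /comp => ->; rewrite d1 mulrC //.
Qed.

Lemma D3 (f g : R -> R) s a b : derivable f s 1 -> derivable g s 1 ->
  derivable (fun t : R => a * f t + b * g t) s 1 /\
  derive1 (fun t : R => a * f t + b * g t) s = a * derive1 f s + b * derive1 g s.
Proof.
move=> df dg.
have dfa : derivable (a \*o f) s 1 := derivableM (derivable_cst a s 1) df.
have dgb : derivable (b \*o g) s 1 := derivableM (derivable_cst b s 1) dg.
have -> : (fun t : R => a * f t + b * g t) = (a \*o f) + (b \*o g) by [].
split; first exact: derivableD.
rewrite derive1E (deriveD dfa dgb) (deriveMl _ df) (deriveMl _ dg).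
by rewrite !derive1E.
Qed.

End S.

Arguments ae_of_negl {R}.
Arguments negl_of_ae {R}.
Arguments negl1 {R}.
Arguments cone {R}.
Arguments fc_cone {R}.
Arguments good {R}.
Arguments lipc {R}.
Arguments Pc {R}.
Arguments Pc_fd {R}.
Arguments D1 {R}.
Arguments in01_oo {R}.
Arguments oo_in01 {R}.
Arguments Pc_ext {R}.
Arguments cl {R}.
Arguments cl01 {R}.
Arguments clid {R}.
Arguments cl_lip {R}.
Arguments lip_cont {R}.
Arguments pre_itv {R}.
Arguments aff_meas {R}.
Arguments aff_push {R}.
Arguments aff_negl {R}.
Arguments D2 {R}.
Arguments D3 {R}.
Section S2.
Variable R : realType.
Local Notation mu := (@lebesgue_measure R).

Lemma lipc_mono (c : R -> R * R) k k' : lipc c k -> k <= k' -> lipc c k'.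
Proof.
move=> H kk s t s01 t01; have [h1 h2] := H s t s01 t01.
have n0 := normr_ge0 (s - t).
split; apply: (le_trans _); [exact: h1| |exact: h2|]; exact: ler_wpM2r.
Qed.

Lemma lipc_K (c : R -> R * R) k : lipc c k -> lipc c (`|k|).
Proof. by move=> H; apply: (lipc_mono _ _ _ H); exact: ler_norm. Qed.

Lemma lipcat_cross (f1 f2 : R -> R) k : 0 <= k ->
  (forall x y, x \in `[0, 1] -> y \in `[0, 1] -> `|f1 x - f1 y| <= k * `|x - y|) ->
  (forall x y, x \in `[0, 1] -> y \in `[0, 1] -> `|f2 x - f2 y| <= k * `|x - y|) ->
  f1 1 = f2 0 -> forall s t, s \in `[0, 1] -> t \in `[0, 1] ->
  2 * s <= 1 -> ~~ (2 * t <= 1) ->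
  `|f1 (2 * s + 0) - f2 (2 * t + -1)| <= (2 * k) * `|s - t|.
Proof.
move=> k0 H1 H2 e s t; rewrite !in_itv /= => /andP[s0 s1] /andP[t0 t1] hs.
rewrite -ltNge => ht.
have a01 : 2 * s + 0 \in `[0, 1] by rewrite in_itv /=; apply/andP; split; lra.
have b01 : 2 * t + -1 \in `[0, 1] by rewrite in_itv /=; apply/andP; split; lra.
have i1 : (1 : R) \in `[0, 1] by rewrite in_itv /= ler01 lexx.
have i0 : (0 : R) \in `[0, 1] by rewrite in_itv /= ler01 lexx.
have -> : f1 (2 * s + 0) - f2 (2 * t + -1) =
   (f1 (2 * s + 0) - f1 1) + (f2 0 - f2 (2 * t + -1)) by rewrite e; ring.
apply: (le_trans (ler_normD _ _)).
apply: (le_trans (lerD (H1 _ _ a01 i1) (H2 _ _ i0 b01))).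
rewrite (ler0_norm (x := 2 * s + 0 - 1)); last by lra.
rewrite (ler0_norm (x := 0 - (2 * t + -1))); last by lra.
have : t - s <= `|s - t| by rewrite distrC; exact: ler_norm.
nra.
Qed.

Lemma lipcat (f1 f2 : R -> R) k : 0 <= k ->
  (forall x y, x \in `[0, 1] -> y \in `[0, 1] -> `|f1 x - f1 y| <= k * `|x - y|) ->
  (forall x y, x \in `[0, 1] -> y \in `[0, 1] -> `|f2 x - f2 y| <= k * `|x - y|) ->
  f1 1 = f2 0 -> forall s t, s \in `[0, 1] -> t \in `[0, 1] ->
  `|(if 2 * s <= 1 then f1 (2 * s + 0) else f2 (2 * s + -1)) -
    (if 2 * t <= 1 then f1 (2 * t + 0) else f2 (2 * t + -1))| <= (2 * k) * `|s - t|.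
Proof.
move=> k0 H1 H2 e s t s01 t01.
have mem0 : forall x : R, x \in `[0, 1] -> 2 * x <= 1 -> 2 * x + 0 \in `[0, 1].
  by move=> x; rewrite !in_itv /= => /andP[? ?] ?; apply/andP; split; lra.
have mem1 : forall x : R, x \in `[0, 1] -> ~~ (2 * x <= 1) -> 2 * x + -1 \in `[0, 1].
  by move=> x; rewrite !in_itv /= -ltNge => /andP[? ?] ?; apply/andP; split; lra.
have sc : forall a b : R, `|(2 * a + b) - (2 * t + b)| = 2 * `|a - t|.
  by move=> a b; rewrite (_ : 2 * a + b - (2 * t + b) = 2 * (a - t)); [rewrite normrM ger0_norm|ring].
case: ifP => hs; case: ifP => ht.
- apply: (le_trans (H1 _ _ (mem0 _ s01 hs) (mem0 _ t01 ht))).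
  by rewrite sc mulrA [k * 2]mulrC.
- by apply: lipcat_cross => //; rewrite ht.
- rewrite distrC [`|s - t|]distrC.
  by apply: lipcat_cross => //; rewrite hs.
- apply: (le_trans (H2 _ _ (mem1 _ s01 (negbT hs)) (mem1 _ t01 (negbT ht)))).
  by rewrite sc mulrA [k * 2]mulrC.
Qed.


Definition cat (c1 c2 : R -> R * R) (s : R) : R * R :=
  if 2 * s <= 1 then c1 (2 * s + 0) else c2 (2 * s + -1).

Lemma cone2 (x y : R) : cone (x, y) -> cone (2 * x, 2 * y).
Proof. rewrite /cone /= => [[h1 [h2 h3]]]; split; [|split]; lra. Qed.

Lemma half_lt (t : R) : (t < 2^-1) = (2 * t < 1).
Proof. by apply/idP/idP => h; lra. Qed.

Lemma half_gt (t : R) : (2^-1 < t) = (1 < 2 * t).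
Proof. by apply/idP/idP => h; lra. Qed.

Lemma Pc_cat c1 c2 : Pc c1 -> Pc c2 -> c1 1 = c2 0 -> Pc (cat c1 c2).
Proof.
move=> [hM1 [[k1 hk1] [N1 [hN1 hg1]]]] [hM2 [[k2 hk2] [N2 [hN2 hg2]]]] e.
have mem0 : forall x : R, x \in `[0, 1] -> 2 * x <= 1 -> 2 * x + 0 \in `[0, 1].
  by move=> x; rewrite !in_itv /= => /andP[? ?] ?; apply/andP; split; lra.
have mem1 : forall x : R, x \in `[0, 1] -> ~~ (2 * x <= 1) -> 2 * x + -1 \in `[0, 1].
  by move=> x; rewrite !in_itv /= -ltNge => /andP[? ?] ?; apply/andP; split; lra.
split.
  move=> s s01; rewrite /cat; case: ifP => h.
  - exact/hM1/mem0.
  - by apply/hM2/mem1 => //; rewrite h.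
split.
  pose K := `|k1| + `|k2|.
  have K0 : 0 <= K by rewrite addr_ge0.
  have l1 : lipc c1 K by apply: (lipc_mono _ _ _ hk1); apply: (le_trans (ler_norm _)); rewrite lerDl.
  have l2 : lipc c2 K by apply: (lipc_mono _ _ _ hk2); apply: (le_trans (ler_norm _)); rewrite lerDr.
  exists (2 * K) => s t s01 t01.
  have E1 : forall x, (cat c1 c2 x).1 = if 2 * x <= 1 then (c1 (2 * x + 0)).1 else (c2 (2 * x + -1)).1.
    by move=> x; rewrite /cat; case: ifP.
  have E2 : forall x, (cat c1 c2 x).2 = if 2 * x <= 1 then (c1 (2 * x + 0)).2 else (c2 (2 * x + -1)).2.
    by move=> x; rewrite /cat; case: ifP.
  rewrite !E1 !E2; split.
  - apply: (lipcat (fun x => (c1 x).1) (fun x => (c2 x).1)) => //.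
    + by move=> x y x01 y01; case: (l1 x y x01 y01).
    + by move=> x y x01 y01; case: (l2 x y x01 y01).
    + by rewrite e.
  - apply: (lipcat (fun x => (c1 x).2) (fun x => (c2 x).2)) => //.
    + by move=> x y x01 y01; case: (l1 x y x01 y01).
    + by move=> x y x01 y01; case: (l2 x y x01 y01).
    + by rewrite e.
exists ([set s | N1 (2 * s + 0)] `|` [set s | N2 (2 * s + -1)] `|` [set 2^-1]); split.
  apply: negligibleU; last exact: negl1.
  by apply: negligibleU; apply: aff_negl.
move=> s nN s01.
have sh : s != 2^-1 by apply/eqP => sh; apply: nN; right.
have [hlt|hgt] : s < 2^-1 \/ 2^-1 < s.
  by move: sh; rewrite neq_lt => /orP[] h; [left|right].
- have nr : \forall t \near s, c1 (2 * t + 0) = cat c1 c2 t.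
    apply: filterS (near_in_itvNyo (b := 2^-1) _) => [t|].
      by rewrite in_itv /= half_lt => h; rewrite /cat ifT //; apply: ltW.
    by rewrite in_itv.
  have hs : 2 * s <= 1 by apply: ltW; rewrite -half_lt.
  have [d1 [d2 cc]] := hg1 (2 * s + 0) (fun h => nN (or_introl (or_introl h))) (mem0 _ s01 hs).
  have [e1 de1] := D2 (fun x => (c1 x).1) s 0 d1.
  have [e2 de2] := D2 (fun x => (c1 x).2) s 0 d2.
  have [f1 df1] := D1 _ _ _ (filterS (fun t (h : c1 (2 * t + 0) = cat c1 c2 t) => f_equal fst h) nr) e1.
  have [f2 df2] := D1 _ _ _ (filterS (fun t (h : c1 (2 * t + 0) = cat c1 c2 t) => f_equal snd h) nr) e2.
  by split => //; split => //; rewrite df1 df2 de1 de2; apply: cone2.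
- have nr : \forall t \near s, c2 (2 * t + -1) = cat c1 c2 t.
    apply: filterS (near_in_itvoy (a := 2^-1) _) => [t|].
      by rewrite in_itv /= half_gt andbT => h; rewrite /cat ifF //; apply/negbTE; rewrite -ltNge.
    by rewrite in_itv /= hgt.
  have hs : ~~ (2 * s <= 1) by rewrite -ltNge -half_gt.
  have [d1 [d2 cc]] := hg2 (2 * s + -1) (fun h => nN (or_introl (or_intror h))) (mem1 _ s01 hs).
  have [e1 de1] := D2 (fun x => (c2 x).1) s (-1) d1.
  have [e2 de2] := D2 (fun x => (c2 x).2) s (-1) d2.
  have [f1 df1] := D1 _ _ _ (filterS (fun t (h : c2 (2 * t + -1) = cat c1 c2 t) => f_equal fst h) nr) e1.
  have [f2 df2] := D1 _ _ _ (filterS (fun t (h : c2 (2 * t + -1) = cat c1 c2 t) => f_equal snd h) nr) e2.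
  by split => //; split => //; rewrite df1 df2 de1 de2; apply: cone2.
Qed.


Lemma conv_pos (lam x y : R) : 0 <= lam <= 1 -> 0 < x -> 0 < y ->
  0 < (1 - lam) * x + lam * y.
Proof.
move=> /andP[l0 l1] x0 y0.
have [h|h] := leP lam (2^-1).
- have : 0 <= lam * y by apply: mulr_ge0 => //; lra.
  have : 2^-1 * x <= (1 - lam) * x by apply: ler_wpM2r; lra.
  have : 0 < 2^-1 * x by apply: mulr_gt0 => //.
  lra.
- have : 0 <= (1 - lam) * x by apply: mulr_ge0; lra.
  have : 2^-1 * y <= lam * y by apply: ler_wpM2r; lra.
  have : 0 < 2^-1 * y by apply: mulr_gt0 => //.
  lra.
Qed.

Lemma conv_nneg (lam x y : R) : 0 <= lam <= 1 -> 0 <= x -> 0 <= y ->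
  0 <= (1 - lam) * x + lam * y.
Proof.
move=> /andP[l0 l1] x0 y0; apply: addr_ge0; apply: mulr_ge0 => //; lra.
Qed.

Lemma conv_lt (lam x y B : R) : 0 <= lam <= 1 -> x < B -> y < B ->
  (1 - lam) * x + lam * y < B.
Proof.
move=> hl xb yb.
have := conv_pos lam (B - x) (B - y) hl; rewrite !subr_gt0 => /(_ xb yb).
lra.
Qed.

Lemma conv_gt (lam x y B : R) : 0 <= lam <= 1 -> B < x -> B < y ->
  B < (1 - lam) * x + lam * y.
Proof.
move=> hl xb yb.
have := conv_pos lam (x - B) (y - B) hl; rewrite !subr_gt0 => /(_ xb yb).
lra.
Qed.

Lemma conv_bound (lam u v B : R) : 0 <= lam <= 1 -> `|u| <= B -> `|v| <= B ->
  `|(1 - lam) * u + lam * v| <= B.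
Proof.
move=> hl hu hv; apply: (le_trans (ler_normD _ _)).
move: hl => /andP[l0 l1].
rewrite !normrM (ger0_norm l0) ger0_norm; last lra.
have : (1 - lam) * `|u| <= (1 - lam) * B by apply: ler_wpM2l => //; lra.
have : lam * `|v| <= lam * B by apply: ler_wpM2l.
lra.
Qed.

Definition comb (lam : R) (c d : R -> R * R) (s : R) : R * R :=
  ((1 - lam) * (c s).1 + lam * (d s).1, (1 - lam) * (c s).2 + lam * (d s).2).

Lemma Pc_comb lam c d : 0 <= lam <= 1 -> Pc c -> Pc d -> Pc (comb lam c d).
Proof.
move=> hl [hM1 [[k1 hk1] [N1 [hN1 hg1]]]] [hM2 [[k2 hk2] [N2 [hN2 hg2]]]].
split.
  move=> s s01; have := hM1 s s01; have := hM2 s s01.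
  rewrite /Mt /comb /= => [[/andP[a1 a2] /andP[a3 a4]]] [/andP[b1 b2] /andP[b3 b4]].
  split; apply/andP; split.
  - exact: conv_gt.
  - exact: conv_lt.
  - exact: conv_gt.
  - exact: conv_lt.
split.
  pose K := `|k1| + `|k2|.
  have l1 : lipc c K by apply: (lipc_mono _ _ _ hk1); apply: (le_trans (ler_norm _)); rewrite lerDl.
  have l2 : lipc d K by apply: (lipc_mono _ _ _ hk2); apply: (le_trans (ler_norm _)); rewrite lerDr.
  exists K => s t s01 t01.
  have [u1 u2] := l1 s t s01 t01; have [v1 v2] := l2 s t s01 t01.
  rewrite /comb /=; split.
  - rewrite (_ : _ - _ = (1 - lam) * ((c s).1 - (c t).1) + lam * ((d s).1 - (d t).1)); last by ring.
    exact: conv_bound.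
  - rewrite (_ : _ - _ = (1 - lam) * ((c s).2 - (c t).2) + lam * ((d s).2 - (d t).2)); last by ring.
    exact: conv_bound.
exists (N1 `|` N2); split; first exact: negligibleU.
move=> s nN s01.
have [d1 [d2 cc]] := hg1 s (fun h => nN (or_introl h)) s01.
have [e1 [e2 ce]] := hg2 s (fun h => nN (or_intror h)) s01.
have [f1 df1] := D3 _ _ s (1 - lam) lam d1 e1.
have [f2 df2] := D3 _ _ s (1 - lam) lam d2 e2.
rewrite /good /comb /=.
split => //; split => //.
rewrite df1 df2.
move: cc ce; rewrite /cone /=.
move: (derive1 (fun t : R => (c t).1) s) (derive1 (fun t : R => (c t).2) s)
  (derive1 (fun t : R => (d t).1) s) (derive1 (fun t : R => (d t).2) s).
move=> x1 x2 y1 y2 [c1 [c2 c3]] [c4 [c5 c6]].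
split; [|split].
- exact: conv_nneg.
- exact: conv_nneg.
- have -> : (1 - lam) * x1 + lam * y1 + ((1 - lam) * x2 + lam * y2) = (1 - lam) * (x1 + x2) + lam * (y1 + y2) by ring.
  exact: conv_pos.
Qed.

End S2.

Arguments lipc_mono {R}.
Arguments lipc_K {R}.
Arguments lipcat_cross {R}.
Arguments lipcat {R}.
Arguments cat {R}.
Arguments cone2 {R}.
Arguments half_lt {R}.
Arguments half_gt {R}.
Arguments Pc_cat {R}.
Arguments conv_pos {R}.
Arguments conv_nneg {R}.
Arguments conv_lt {R}.
Arguments conv_gt {R}.
Arguments conv_bound {R}.
Arguments comb {R}.
Arguments Pc_comb {R}.

Lemma glob_lip (R : realType) (c : R -> R * R) k : lipc c k ->
  (forall s t, `|(c (cl s)).1 - (c (cl t)).1| <= `|k| * `|s - t|) /\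
  (forall s t, `|(c (cl s)).2 - (c (cl t)).2| <= `|k| * `|s - t|).
Proof.
move=> H; split => s t; have [h1 h2] := H _ _ (cl01 s) (cl01 t).
- apply: (le_trans h1); apply: (le_trans (ler_wpM2r (normr_ge0 _) (ler_norm k))).
  by apply: ler_wpM2l => //; exact: cl_lip.
- apply: (le_trans h2); apply: (le_trans (ler_wpM2r (normr_ge0 _) (ler_norm k))).
  by apply: ler_wpM2l => //; exact: cl_lip.
Qed.

Lemma Pc_cont (R : realType) (c : R -> R * R) : Pc c ->
  continuous (fun s => (c (cl s)).1) /\ continuous (fun s => (c (cl s)).2).
Proof.
move=> [_ [[k hk] _]]; have [h1 h2] := glob_lip _ _ _ hk.
split; exact: lip_cont h1 || exact: lip_cont h2.
Qed.

Theorem lemma2p10 (R : realType) (Omega : R -> R -> R)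
  (Omega_smooth : smooth_on (@Mt R) Omega)
  (Omega_pos : forall z : R * R, Mt z -> 0 < Omega z.1 z.2)
  (gamma : R -> R * R) (hgamma : fd_lipschitz_causal Omega gamma)
  (p : R * R) (hp1 : Jplus Omega (gamma 0) p) (hp2 : Jminus Omega (gamma 1) p) :
  exists Gamma : R -> R -> R * R,
    causal_homotopy Omega gamma Gamma /\
    exists s lam : R, s \in `[0, 1] /\ lam \in `[0, 1] /\ p = Gamma s lam.
Proof.
have PG : Pc gamma := (Pc_fd Omega Omega_pos gamma).2 hgamma.
case: hp1 => c1 [hc1 [c10 c11]]; case: hp2 => c2 [hc2 [c20 c21]].
have P1 : Pc c1 := (Pc_fd Omega Omega_pos c1).2 hc1.
have P2 : Pc c2 := (Pc_fd Omega Omega_pos c2).2 hc2.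
have e12 : c1 1 = c2 0 by rewrite c11 c20.
have Psig : Pc (cat c1 c2) := Pc_cat c1 c2 P1 P2 e12.
pose G0 := fun s => gamma (cl s).
pose S := fun s => cat c1 c2 (cl s).
have PG0 : Pc G0 by apply: (Pc_ext gamma G0 PG) => s s01; rewrite /G0 clid.
have PS : Pc S by apply: (Pc_ext (cat c1 c2) S Psig) => s s01; rewrite /S clid.
have i0 : (0 : R) \in `[0, 1] by rewrite in_itv /= lexx ler01.
have i1 : (1 : R) \in `[0, 1] by rewrite in_itv /= lexx ler01.
have S0 : S 0 = gamma 0 by rewrite /S clid // /cat mulr0 addr0 ler01 c10.
have S1 : S 1 = gamma 1.
  rewrite /S clid // /cat mulr1 ifF; last by apply/negbTE; rewrite -ltNge ltr1n.
  by rewrite (_ : 2 + -1 = 1 :> R) // -?c21; lra.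
have G00 : G0 0 = gamma 0 by rewrite /G0 clid.
have G01 : G0 1 = gamma 1 by rewrite /G0 clid.
exists (fun s lam => comb lam G0 S s); split.
  split.
    have hc : continuous (fun z : R * R => comb z.2 G0 S z.1); last first.
      exact: continuous_subspaceT hc.
    move=> z.
    have [g1 g2] := Pc_cont _ gamma PG.
    have [h1 h2] := Pc_cont _ (cat c1 c2) Psig.
    rewrite /comb /continuous_at /=. apply: (@cvg_pair _ _ _ _ (nbhs _) (nbhs _)).
    - apply: cvgD; apply: cvgM.
      + by apply: cvgB; [exact: cvg_cst | exact: cvg_snd].
      + exact: (continuous_comp (@cvg_fst _ _ _ _ _) (g1 z.1)).
      + exact: cvg_snd.
      + exact: (continuous_comp (@cvg_fst _ _ _ _ _) (h1 z.1)).
    - apply: cvgD; apply: cvgM.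
      + by apply: cvgB; [exact: cvg_cst | exact: cvg_snd].
      + exact: (continuous_comp (@cvg_fst _ _ _ _ _) (g2 z.1)).
      + exact: cvg_snd.
      + exact: (continuous_comp (@cvg_fst _ _ _ _ _) (h2 z.1)).
  split.
    move=> s s01; rewrite /comb /G0 clid // subr0 !mul1r !mul0r !addr0.
    by case: (gamma s).
  move=> lam; rewrite in_itv /= => hl.
  split; first exact: (Pc_fd Omega Omega_pos _).1 (Pc_comb lam G0 S hl PG0 PS).
  rewrite /comb S0 S1 G00 G01; split.
  - by case: (gamma 0) => a b /=; congr pair; ring.
  - by case: (gamma 1) => a b /=; congr pair; ring.
exists 2^-1, 1; split.
  by rewrite in_itv /=; apply/andP; split; lra.
split; first exact: i1.
rewrite /comb /S clid; last by rewrite in_itv /=; apply/andP; split; lra.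
rewrite /cat (_ : 2 * 2^-1 = 1 :> R); last by rewrite mulfV.
rewrite lexx addr0 subrr !mul0r !add0r !mul1r -c11.
by case: (c1 1).
Qed.
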